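(* Fix an integer $p\ge 1$ and a real vector $\psi=(\psi_{w};\ 0<w\le \mathbf{1})$ indexed by the nonzero binary vectors $w\in\{0,1\}^p$, and for $v\in\{0,1\}^p$ let $\mathrm{OR}_{v}=\exp\big(\sum_{0<w\le v}\psi_w\big)$. Let $J\subset\{1,\dots,p\}$, $K=\{1,\dots,p\}\setminus J$, write $v=(v_J,v_K)$, and fix $v_K$. Define $\Delta^{(w,v_K)}\mathrm{OR}=\sum_{0\le u\le w}(-1)^{|w-u|}\mathrm{OR}_{(u,v_K)}$ for $w\in\{0,1\}^{|J|}$, and for $v_J\in\{0,1\}^{|J|}$ and $0\le i\le |v_J|$ define the prediction $$\mathrm{OR}_{(v_J,v_K),i}=\sum_{0\le w\le v_J,\ |w|\le i}\Delta^{(w,v_K)}\mathrm{OR}.$$ Then, if $0\le i<|v_J|$, $$\mathrm{OR}_{(v_J,v_K),i}=\sum_{0\le w\le v_J,\ |w|\le i}\mathrm{OR}_{(w,v_K)}\,(-1)^{i-|w|}\binom{|v_J|-1-|w|}{i-|w|},$$ and if $i=|v_J|$, then $\mathrm{OR}_{(v_J,v_K),i}=\mathrm{OR}_{(v_J,v_K)}$.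
   Context: Inequalities between binary vectors are componentwise; for a binary vector $w$, $|w|=\sum_j w_j$; $\mathbf 0$, $\mathbf 1$ are the all-zeros and all-ones vectors. Coordinates are ordered so that the factors in $J$ come first, $v=(v_J,v_K)$. Sums over $w$ range over binary vectors $w\in\{0,1\}^{|J|}$. *)

(* Defs.v *)
From HB Require Import structures.
From mathcomp Require Import all_boot all_order all_algebra.
From mathcomp Require Import all_classical all_reals all_analysis.
Set Implicit Arguments. Unset Strict Implicit. Unset Printing Implicit Defensive.
Import Order.TTheory GRing.Theory Num.Theory.
Local Open Scope ring_scope.

Definition bvec (p : nat) := {ffun 'I_p -> bool}.
Definition bzero (p : nat) : bvec p := [ffun=> false].
Definition bleq (p : nat) (w v : bvec p) : bool := [forall i, w i ==> v i].
Definition bwt (p : nat) (w : bvec p) : nat := #|[set i | w i]|.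
Definition onJ (p : nat) (J : {set 'I_p}) (w : bvec p) : bool :=
  [forall i, w i ==> (i \in J)].
(* (u_J, v_K): J-coordinates from u, K = complement-of-J coordinates from vK *)
Definition bglue (p : nat) (J : {set 'I_p}) (u vK : bvec p) : bvec p :=
  [ffun i => if i \in J then u i else vK i].

Definition OR (R : realType) (p : nat) (psi : bvec p -> R) (v : bvec p) : R :=
  expR (\sum_(w : bvec p | (w != bzero p) && bleq w v) psi w).

Definition DeltaOR (R : realType) (p : nat) (psi : bvec p -> R)
  (J : {set 'I_p}) (vK w : bvec p) : R :=
  \sum_(u : bvec p | onJ J u && bleq u w)
     (-1) ^+ (bwt w - bwt u) * OR psi (bglue J u vK).

Definition ORpred (R : realType) (p : nat) (psi : bvec p -> R)
  (J : {set 'I_p}) (vK vJ : bvec p) (i : nat) : R :=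
  \sum_(w : bvec p | (onJ J w && bleq w vJ && (bwt w <= i)%N)) DeltaOR psi J vK w.

(* Main.v *)
Require Import Defs.
From HB Require Import structures.
From mathcomp Require Import all_boot all_order all_algebra.
From mathcomp Require Import all_classical all_reals all_analysis.
From mathcomp Require Import ring lra zify.
Import Order.TTheory GRing.Theory Num.Theory.
Local Open Scope ring_scope.
Set Implicit Arguments. Unset Strict Implicit.

Section Aux.
Variable R : realType.

Lemma alt_binom (n m : nat) :
  \sum_(k < m.+1) (-1) ^+ k * ('C(n.+1, k))%:R = (-1) ^+ m * ('C(n, m))%:R :> R.
Proof.
elim: m => [|m IH]; first by rewrite big_ord1 !bin0 expr0.
rewrite big_ord_recr /= IH binS natrD exprS.
rewrite mulrDr !mulN1r; lra.
Qed.

Variable p : nat.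
Definition setof (w : bvec p) : {set 'I_p} := [set j | w j].

Lemma bleqE (w v : bvec p) : bleq w v = (setof w \subset setof v).
Proof.
rewrite /bleq; apply/forallP/fintype.subsetP => H j; first by rewrite !inE => /(implyP (H j)).
by apply/implyP => wj; have := H j; rewrite !inE; apply.
Qed.

Lemma bwtE (w : bvec p) : bwt w = #|setof w|.
Proof. by []. Qed.

Lemma setof_inj : injective setof.
Proof.
move=> w v /setP E; apply/ffunP => j; have := E j; rewrite /setof !inE.
by case: (w j); case: (v j).
Qed.

Lemma bleq_trans (u w v : bvec p) : bleq u w -> bleq w v -> bleq u v.
Proof. by rewrite !bleqE; apply: fintype.subset_trans. Qed.

Lemma bwt_le (w v : bvec p) : bleq w v -> (bwt w <= bwt v)%N.
Proof. by rewrite bleqE; apply: subset_leq_card. Qed.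

Lemma onJ_bleq J (w v : bvec p) : onJ J v -> bleq w v -> onJ J w.
Proof.
move=> /forallP H /forallP H2; apply/forallP => j; apply/implyP => wj.
exact: (implyP (H j) (implyP (H2 j) wj)).
Qed.

Lemma bleq_eq (w v : bvec p) : bleq w v -> bwt w = bwt v -> w = v.
Proof.
rewrite bleqE !bwtE => sub E; apply: setof_inj; apply/eqP.
by rewrite eqEcard sub E leqnn.
Qed.


Lemma inner (u v : bvec p) (i : nat) : bleq u v -> (bwt u <= i)%N ->
  \sum_(w : bvec p | bleq u w && bleq w v && (bwt w <= i)%N) (-1) ^+ (bwt w - bwt u) =
  \sum_(k < (i - bwt u).+1) (-1) ^+ k * ('C(bwt v - bwt u, k))%:R :> R.
Proof.
move=> uv ui.
set U := setof u; set V := setof v; set D := V :\: U.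
have UV : U \subset V by rewrite -bleqE.
pose h := fun X : {set 'I_p} => [ffun j => (j \in X) || u j] : bvec p.
have key X : setof (h X) = X :|: U by apply/setP => j; rewrite !inE ffunE.
rewrite (reindex_onto h (fun w => setof w :\: U)); last first.
  move=> w /andP[/andP[/forallP uw _] _]; apply/ffunP => j.
  rewrite ffunE !inE; have := uw j; by case: (u j); case: (w j).
transitivity (\sum_(X : {set 'I_p} | (X \subset D) && (#|X| + #|U| <= i)%N) ((-1) ^+ (bwt (h X) - bwt u) : R)).
  apply: eq_bigl => X.
  rewrite !bleqE !bwtE key -/U -/V.
  case XD: (X \subset D).
    have XU : X :&: U = finset.set0.
      apply/setP => j; rewrite !inE; have := fintype.subsetP XD j; rewrite !inE.
      by case: (j \in X) => // /(_ isT) /andP[/negbTE ->].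
    rewrite cardsU XU cards0 subn0 finset.subsetUr /=.
    have -> : X :|: U \subset V.
      rewrite finset.subUset UV andbT; apply: fintype.subset_trans XD _; exact: finset.subsetDl.
    have -> : (X :|: U) :\: U == X.
      apply/eqP/setP => j; rewrite !inE; have := fintype.subsetP XD j; rewrite !inE.
      case: (j \in X) => /= [/(_ isT) /andP[/negbTE -> _] // | _]; by case: (u j).
    by rewrite andbT.
  apply/negbTE/negP => /andP[/andP[/andP[_ sub] _] /eqP E]; move/negP: XD; apply.
  by rewrite -E /D; apply: finset.setSD.
transitivity (\sum_(X : {set 'I_p} | (X \subset D) && (#|X| + #|U| <= i)%N) ((-1) ^+ #|X| : R)).
  apply: eq_bigr => X /andP[XD _].
  rewrite !bwtE key cardsU.
  have -> : X :&: U = finset.set0.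
    apply/setP => j; rewrite !inE; have := fintype.subsetP XD j; rewrite !inE.
    by case: (j \in X) => // /(_ isT) /andP[/negbTE ->].
  by rewrite cards0 subn0 addnK.
rewrite (partition_big (fun X : {set 'I_p} => (inord #|X| : 'I_(i - bwt u).+1)) xpredT) //.
apply: eq_bigr => k _.
rewrite (eq_bigr (fun _ => (-1) ^+ k)); last first.
  move=> X /andP[/andP[_ hh] /eqP <-]; rewrite inordK //.
  rewrite bwtE -/U ltnS leq_subRL; [by rewrite addnC | exact: ui].
rewrite (eq_bigl (fun X => X \in [set X : {set 'I_p} | X \subset D & #|X| == k])); last first.
  move=> X; rewrite inE -andbA; congr (_ && _).
  case: (leqP (#|X| + #|U|) i) => hh /=.
    rewrite -(inj_eq val_inj) /= inordK //.
    rewrite bwtE -/U ltnS leq_subRL; first by rewrite addnC.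
    exact: ui.
  symmetry; apply/eqP => E; move: (ltn_ord k); rewrite -E bwtE -/U ltnS leq_subRL.
    by rewrite addnC leqNgt hh.
  exact: ui.
rewrite sumr_const cards_draws /D cardsD (finset.setIidPr UV).
by rewrite mulr_natr.
Qed.


Lemma bleq_refl (v : bvec p) : bleq v v.
Proof. by rewrite bleqE fintype.subxx. Qed.

End Aux.

Lemma main_exch (R : realType) (p : nat) (psi : bvec p -> R) (J : {set 'I_p}) (vK vJ : bvec p) (i : nat) :
  onJ J vJ ->
  ORpred psi J vK vJ i =
  \sum_(u : bvec p | onJ J u && bleq u vJ && (bwt u <= i)%N)
     OR psi (bglue J u vK) * \sum_(k < (i - bwt u).+1) (-1) ^+ k * ('C(bwt vJ - bwt u, k))%:R.
Proof.
move=> oJ; rewrite /ORpred /DeltaOR.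
rewrite (exchange_big_dep (fun u => onJ J u && bleq u vJ && (bwt u <= i)%N)) /=; last first.
  move=> w u /andP[/andP[_ wv] wi] /andP[ou uw].
  by rewrite ou (bleq_trans uw wv) (leq_trans (bwt_le uw) wi).
apply: eq_bigr => u /andP[/andP[ou uv] ui].
rewrite -(@inner R _ _ _ _ uv ui) mulr_sumr; apply: eq_big => [w|w _]; last by rewrite mulrC.
rewrite ou /=; case wv: (bleq w vJ).
  rewrite (onJ_bleq oJ wv) /=. by rewrite andbT andbC.
by rewrite !andbF.
Qed.

Unset Implicit Arguments. Set Strict Implicit.
Theorem proposition1 (R : realType) (p : nat) (hp : (1 <= p)%N)
  (psi : bvec p -> R) (J : {set 'I_p}) (vK vJ : bvec p) (i : nat) :
  onJ J vJ ->
  ((i < bwt vJ)%N ->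
     ORpred psi J vK vJ i =
     \sum_(w : bvec p | (onJ J w && bleq w vJ && (bwt w <= i)%N))
        OR psi (bglue J w vK) * (-1) ^+ (i - bwt w)
        * ('C(bwt vJ - 1 - bwt w, i - bwt w))%:R) /\
  (i = bwt vJ -> ORpred psi J vK vJ i = OR psi (bglue J vJ vK)).
Proof.
move=> oJ; rewrite (main_exch psi vK i oJ); split.
  move=> iv; apply: eq_bigr => u /andP[_ ui].
  have -> : (bwt vJ - bwt u = (bwt vJ - 1 - bwt u).+1)%N.
    move: iv ui; set a := bwt vJ; set b := bwt u; lia.
  by rewrite alt_binom mulrA.
move=> iv; rewrite (bigD1 vJ) /=; last by rewrite oJ bleq_refl iv leqnn.
rewrite subnn iv subnn big_ord1 expr0 bin0 mul1r mulr1 big1 ?addr0 //.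
move=> u /andP[/andP[/andP[_ uv] _] uneq].
have lt : (bwt u < bwt vJ)%N.
  rewrite ltn_neqAle bwt_le // andbT; apply/eqP => E; move/eqP: uneq; apply.
  exact: bleq_eq.
have -> : (bwt vJ - bwt u = (bwt vJ - 1 - bwt u).+1)%N.
  move: lt; set a := bwt vJ; set b := bwt u; lia.
rewrite alt_binom bin_small ?mulr0 //.
Qed.
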